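(* Let $A$ be an integral residuated $\vee$-semilattice. Then every $\to$-prime filter of $A$ is $\vee$-prime, every $\leadsto$-prime filter of $A$ is $\vee$-prime, and every prime filter of $A$ is $\vee$-prime.
   Context: A residuated poset is a partially ordered semigroup $(A;\cdot,\le)$ with binary operations $\to,\leadsto$ such that $x\cdot y\le z$ iff $x\le y\to z$ iff $y\le x\leadsto z$. It is a residuated $\vee$-semilattice if $(A,\le)$ is a join-semilattice, and integral if it has a greatest element $1$ that is a multiplicative identity. A filter is a nonempty upward closed subset closed under $\cdot$. A filter $F$ is $\to$-prime if for all $x,y$, $x\to y\in F$ or $y\to x\in F$; $\leadsto$-prime if for all $x,y$, $x\leadsto y\in F$ or $y\leadsto x\in F$; prime if both; $\vee$-prime if $x\vee y\in F$ implies $x\in F$ or $y\in F$. *)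

(* Defs.v *)
Record IRJSL (A : Type) := {
  le : A -> A -> Prop;
  mul : A -> A -> A;
  imp : A -> A -> A;
  limp : A -> A -> A;
  join : A -> A -> A;
  one : A;
  le_refl : forall x, le x x;
  le_antisym : forall x y, le x y -> le y x -> x = y;
  le_trans : forall x y z, le x y -> le y z -> le x z;
  mul_assoc : forall x y z, mul (mul x y) z = mul x (mul y z);
  mul_mono : forall x y z w, le x y -> le z w -> le (mul x z) (mul y w);
  res_imp : forall x y z, le (mul x y) z <-> le x (imp y z);
  res_limp : forall x y z, le (mul x y) z <-> le y (limp x z);
  join_ub_l : forall x y, le x (join x y);
  join_ub_r : forall x y, le y (join x y);
  join_lub : forall x y z, le x z -> le y z -> le (join x y) z;
  one_top : forall x, le x one;
  mul_one_l : forall x, mul one x = x;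
  mul_one_r : forall x, mul x one = x
}.

Arguments le {A} _ _ _.
Arguments mul {A} _ _ _.
Arguments imp {A} _ _ _.
Arguments limp {A} _ _ _.
Arguments join {A} _ _ _.
Arguments one {A} _.

Section Filters.
Context {A : Type} (S : IRJSL A).

Definition is_filter (F : A -> Prop) : Prop :=
  (exists x, F x) /\
  (forall x y, F x -> le S x y -> F y) /\
  (forall x y, F x -> F y -> F (mul S x y)).

Definition imp_prime (F : A -> Prop) : Prop :=
  is_filter F /\ forall x y, F (imp S x y) \/ F (imp S y x).

Definition limp_prime (F : A -> Prop) : Prop :=
  is_filter F /\ forall x y, F (limp S x y) \/ F (limp S y x).

Definition prime_filter (F : A -> Prop) : Prop :=
  is_filter F /\ (forall x y, F (imp S x y) \/ F (imp S y x))
              /\ (forall x y, F (limp S x y) \/ F (limp S y x)).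

Definition join_prime (F : A -> Prop) : Prop :=
  is_filter F /\ forall x y, F (join S x y) -> F x \/ F y.

End Filters.

(* Main.v *)
Require Import Defs.

Lemma imp_case (A : Type) (S : IRJSL A) (F : A -> Prop) x y :
  is_filter S F -> F (join S x y) -> F (imp S x y) -> F y.
Proof.
  intros [_ [Hup Hmul]] Hj Hi.
  apply (Hup (mul S (imp S x y) (join S x y))); [apply Hmul; auto|].
  apply (proj2 (res_limp A S _ _ _)). apply join_lub; apply (proj1 (res_limp A S _ _ _)).
  - apply (proj2 (res_imp A S _ _ _)). apply le_refl.
  - apply (le_trans A S _ (mul S (one S) y)); [apply mul_mono; [apply one_top|apply le_refl]|].
    destruct (eq_sym (mul_one_l A S y)). apply le_refl.
Qed.

Lemma limp_case (A : Type) (S : IRJSL A) (F : A -> Prop) x y :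
  is_filter S F -> F (join S x y) -> F (limp S x y) -> F y.
Proof.
  intros [_ [Hup Hmul]] Hj Hi.
  apply (Hup (mul S (join S x y) (limp S x y))); [apply Hmul; auto|].
  apply (proj2 (res_imp A S _ _ _)). apply join_lub; apply (proj1 (res_imp A S _ _ _)).
  - apply (proj2 (res_limp A S _ _ _)). apply le_refl.
  - apply (le_trans A S _ (mul S y (one S))); [apply mul_mono; [apply le_refl|apply one_top]|].
    destruct (eq_sym (mul_one_r A S y)). apply le_refl.
Qed.

Lemma join_comm_F (A : Type) (S : IRJSL A) (F : A -> Prop) x y :
  is_filter S F -> F (join S x y) -> F (join S y x).
Proof.
  intros [_ [Hup _]] H. apply (Hup _ _ H). apply join_lub; [apply join_ub_r|apply join_ub_l].
Qed.

Theorem lemma5p2 (A : Type) (S : IRJSL A) :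
  (forall F : A -> Prop, imp_prime S F -> join_prime S F) /\
  (forall F : A -> Prop, limp_prime S F -> join_prime S F) /\
  (forall F : A -> Prop, prime_filter S F -> join_prime S F).
Proof.
  assert (H1 : forall F : A -> Prop, imp_prime S F -> join_prime S F).
  { intros F [Hf Hp]. split; [exact Hf|]. intros x y Hj.
    destruct (Hp x y) as [H|H].
    - right. exact (imp_case A S F x y Hf Hj H).
    - left. exact (imp_case A S F y x Hf (join_comm_F A S F x y Hf Hj) H). }
  assert (H2 : forall F : A -> Prop, limp_prime S F -> join_prime S F).
  { intros F [Hf Hp]. split; [exact Hf|]. intros x y Hj.
    destruct (Hp x y) as [H|H].
    - right. exact (limp_case A S F x y Hf Hj H).
    - left. exact (limp_case A S F y x Hf (join_comm_F A S F x y Hf Hj) H). }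
  split; [exact H1|split; [exact H2|]].
  intros F [Hf [Hp _]]. apply H1. split; assumption.
Qed.
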